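(* There exists $N_0$ such that for every integer $n>N_0$, \[ b_{sn+s-1}<b_{sn+s-2}<\cdots<b_{sn+1}<b_n . \] Moreover $b_n\le b_{sn}$ for every $n\ge1$, and $b_n=b_{sn}$ (for any, equivalently all, $n\ge1$) if and only if $h(0)=0$.
   Context: Fix integers $p\ge 3$ and $2\le s<p$, and a set $A\subset\{0,1,\dots,p-1\}$ with $\#A=s$. Let $h:\{0,1,\dots,s-1\}\to A$ be the unique strictly increasing bijection. For a positive integer $n$ with base-$s$ expansion $n=\sum_{i=0}^k\varepsilon_i s^i$ ($\varepsilon_i\in\{0,\dots,s-1\}$, $\varepsilon_k\ne 0$), put $a_n=\sum_{i=0}^k h(\varepsilon_i)p^i$. Let $b_n=a_n/n^{\log_s p}$ for $n\ge1$. *)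

(* Defs.v *)
From mathcomp Require Import all_boot.
From Stdlib Require Import Reals.
Set Implicit Arguments. Unset Strict Implicit. Unset Printing Implicit Defensive.

(* a_aux k n : replace the base-s digits of n by their h-images and read the
   result in base p (using at most k digits; fuel). *)
Fixpoint a_aux (s p : nat) (h : nat -> nat) (k n : nat) : nat :=
  match k with
  | 0 => 0
  | k'.+1 => if n == 0 then 0 else h (n %% s) + p * a_aux s p h k' (n %/ s)
  end.

(* a_n = sum_i h(eps_i) p^i where n = sum_i eps_i s^i (eps_k <> 0). n digits of
   fuel suffice since n has at most n base-s digits (s >= 2). *)
Definition a_seq (s p : nat) (h : nat -> nat) (n : nat) : nat := a_aux s p h n n.

Definition b_seq (s p : nat) (h : nat -> nat) (n : nat) : R :=
  Rdiv (INR (a_seq s p h n)) (Rpower (INR n) (Rdiv (ln (INR p)) (ln (INR s)))).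

(* Main.v *)
Require Import Defs.
From Stdlib Require Import Reals Lia Lra.
From mathcomp Require Import all_boot zify.

Lemma a_aux_stable s p h : 1 < s -> forall k k' m, m <= k -> m <= k' ->
  a_aux s p h k m = a_aux s p h k' m.
Proof.
move=> hs; elim=> [|k IH] [|k'] m /= hk hk'.
- by [].
- by have -> : m = 0 by lia.
- by have -> : m = 0 by lia.
case: eqP => // /eqP m0; congr (_ + p * _); apply: IH.
- have : m %/ s < m by rewrite ltn_Pdiv // lt0n.
  lia.
- have : m %/ s < m by rewrite ltn_Pdiv // lt0n.
  lia.
Qed.

Lemma a_seq_rec s p h n : 1 < s -> 0 < n ->
  a_seq s p h n = h (n %% s) + p * a_seq s p h (n %/ s).
Proof.
move=> hs; case: n => // n _; rewrite /a_seq /=.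
congr (_ + p * _); apply: a_aux_stable => //.
have : n.+1 %/ s < n.+1 by rewrite ltn_Pdiv.
lia. 
Qed.

Lemma a_seq_sn s p h n j : 1 < s -> 0 < n -> j < s ->
  a_seq s p h (s * n + j) = h j + p * a_seq s p h n.
Proof.
move=> hs hn hj; rewrite a_seq_rec //; last by lia.
rewrite mulnC modnMDl modn_small // divnMDl; last by lia.
by rewrite divn_small // addn0.
Qed.

Lemma growth1 s p : s < p -> forall j, s ^ j * (s + j) <= p ^ j * s.
Proof.
move=> hsp; elim=> [|j IH]; first by rewrite /= addn0 !mul1n.
rewrite !expnS.
move: IH; set X := s ^ j; set Y := p ^ j => IH.
nia.
Qed.

Lemma growth2 s p : 1 < s -> s < p -> forall k, 2 * (s * s) <= k -> s ^ (k.+2) <= p ^ k.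
Proof.
move=> hs hsp k hk.
set j := s * s.
have hj : s ^ j.+1 <= p ^ j.
  have := @growth1 s p hsp j; rewrite expnS.
  have : s ^ j * (s * s) <= s ^ j * (s + j) by rewrite leq_mul2l; apply/orP; right; lia.
  move=> h1 h2; have h3 : s * s ^ j * s <= p ^ j * s by nia.
  by rewrite leq_pmul2r in h3; lia.
have -> : k = (k - 2 * j) + j + j by lia.
rewrite !expnD.
have -> : (k - 2 * j + j + j).+2 = (k - 2 * j) + j.+1 + j.+1 by lia.
rewrite !expnD.
apply: leq_mul; [apply: leq_mul => // |] => //.
elim: (k - 2 * j) => [|t IHt]; first by [].
rewrite !expnS; apply: leq_mul => //; lia.
Qed.

Lemma a_lower s p h : 1 < s -> (forall i j, i < j -> j < s -> h i < h j) ->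
  forall n, 0 < n -> exists k, n < s ^ k.+1 /\ p ^ k <= a_seq s p h n.
Proof.
move=> hs hmono n; elim: n {-2}n (leqnn n) => [|N IH] n hn n0; first lia.
have [ns|ns] := ltnP n s.
  exists 0; rewrite expn0 expn1; split => //.
  rewrite a_seq_rec // modn_small // divn_small // /a_seq /= muln0 addn0.
  have := hmono 0 n n0 ns; lia.
have m0 : 0 < n %/ s by rewrite divn_gt0 //; lia.
have mlt : n %/ s < n by rewrite ltn_Pdiv //; lia.
have [k [hk1 hk2]] := IH (n %/ s) ltac:(lia) m0.
exists k.+1; split.
- have := divn_eq n s; have := ltn_pmod n (ltnW hs).
  rewrite (expnS s k.+1) => h1 h2.
  have : n %/ s + 1 <= s ^ k.+1 by lia.
  nia.
- rewrite a_seq_rec //.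
  rewrite expnS; have := leq_mul (leqnn p) hk2; lia.
Qed.
Open Scope R_scope.

Lemma INR_lt {m n : nat} : (m < n)%N -> INR m < INR n.
Proof. by move=> h; apply: lt_INR; apply/ltP. Qed.
Lemma INR_le {m n : nat} : (m <= n)%N -> INR m <= INR n.
Proof. by move=> h; apply: le_INR; apply/leP. Qed.

Lemma div_lt a b c d : 0 < b -> 0 < d -> a * d < c * b -> a / b < c / d.
Proof.
move=> hb hd h; apply: (Rmult_lt_reg_r (b * d)); first by apply: Rmult_lt_0_compat.
replace (a / b * (b * d)) with (a * d) by (field; lra).
replace (c / d * (b * d)) with (c * b) by (field; lra).
exact h.
Qed.

Lemma alpha_gt1 (s p : nat) : (1 < s)%N -> (s < p)%N -> 1 < ln (INR p) / ln (INR s).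
Proof.
move=> hs hsp.
have h1 : 1 < INR s by have := INR_lt hs.
have l0 : 0 < ln (INR s) by rewrite -ln_1; apply: ln_increasing; lra.
have l1 : ln (INR s) < ln (INR p) by apply: ln_increasing; [lra | apply: INR_lt].
apply: (Rmult_lt_reg_r (ln (INR s))) => //.
replace (ln (INR p) / ln (INR s) * ln (INR s)) with (ln (INR p)) by (field; lra).
lra.
Qed.

Lemma pow_scale (s p n : nat) : (1 < s)%N -> (s < p)%N -> (0 < n)%N ->
  Rpower (INR (s * n)) (ln (INR p) / ln (INR s)) =
  INR p * Rpower (INR n) (ln (INR p) / ln (INR s)).
Proof.
move=> hs hsp hn.
have h1 : 1 < INR s by have := INR_lt hs.
have hp : 0 < INR p by have := INR_lt (ltn_trans (ltnW hs) hsp); rewrite /=; lra.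
have hn' : 0 < INR n by have := INR_lt hn.
have l0 : 0 < ln (INR s) by rewrite -ln_1; apply: ln_increasing; lra.
rewrite mult_INR -Rpower_mult_distr; [|lra|lra]; congr (_ * _).
rewrite /Rpower.
replace (ln (INR p) / ln (INR s) * ln (INR s)) with (ln (INR p)) by (field; lra).
by rewrite exp_ln.
Qed.

Lemma cmp (al : R) (y c d : nat) : 1 < al -> (0 < y)%N -> (c * y < d * y.+1)%N ->
  INR c / Rpower (INR y.+1) al < INR d / Rpower (INR y) al.
Proof.
move=> ha hy hcd.
have hy' : 0 < INR y by have := INR_lt hy.
have hy1 : INR y < INR y.+1 by apply: INR_lt.
have E : forall x, 0 < x -> Rpower x al = x * Rpower x (al - 1).
  move=> x hx; rewrite -[x in x * _](Rpower_1 x hx) -Rpower_plus; congr Rpower; ring.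
have YY : Rpower (INR y) (al - 1) < Rpower (INR y.+1) (al - 1).
  apply: Rlt_Rpower_l; lra.
have Y0 : 0 < Rpower (INR y) (al - 1) by apply: exp_pos.
have hn : INR c * INR y < INR d * INR y.+1.
  rewrite -!mult_INR; exact: INR_lt.
have d0 : 0 <= INR d by apply: pos_INR.
rewrite (E (INR y)) // (E (INR y.+1)); last lra.
apply: div_lt; first (apply: Rmult_lt_0_compat; lra).
  by apply: Rmult_lt_0_compat.
have : INR c * INR y * Rpower (INR y) (al - 1) < INR d * INR y.+1 * Rpower (INR y) (al - 1).
  by apply: Rmult_lt_compat_r.
have : INR d * INR y.+1 * Rpower (INR y) (al - 1) <= INR d * INR y.+1 * Rpower (INR y.+1) (al - 1).
  apply: Rmult_le_compat_l; [apply: Rmult_le_pos; lra | lra].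
nra.
Qed.

Lemma b_sn (s p n : nat) (h : nat -> nat) : (1 < s)%N -> (s < p)%N -> (0 < n)%N ->
  b_seq s p h (s * n) = b_seq s p h n + INR (h 0%N) / (INR p * Rpower (INR n) (ln (INR p) / ln (INR s))).
Proof.
move=> hs hsp hn.
have E := @a_seq_sn s p h n 0 hs hn (ltnW hs); rewrite addn0 in E.
have hp : 0 < INR p by have := INR_lt (ltn_trans (ltnW hs) hsp); rewrite /=; lra.
have P0 : 0 < Rpower (INR n) (ln (INR p) / ln (INR s)) by apply: exp_pos.
rewrite /b_seq pow_scale // E plus_INR mult_INR; field; lra.
Qed.

Lemma b_n_eq (s p n : nat) (h : nat -> nat) : (1 < s)%N -> (s < p)%N -> (0 < n)%N ->
  b_seq s p h n = INR (p * a_seq s p h n) / Rpower (INR (s * n)) (ln (INR p) / ln (INR s)).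
Proof.
move=> hs hsp hn.
have hp : 0 < INR p by have := INR_lt (ltn_trans (ltnW hs) hsp); rewrite /=; lra.
have P0 : 0 < Rpower (INR n) (ln (INR p) / ln (INR s)) by apply: exp_pos.
rewrite /b_seq pow_scale // mult_INR; field; lra.
Qed.

Close Scope R_scope.

Theorem mainTheorem7 (p s : nat) (A : seq nat) (h : nat -> nat)
  (hp : 3 <= p) (hs2 : 2 <= s) (hsp : s < p)
  (hAuniq : uniq A) (hAsize : size A = s) (hAp : all (fun x => x < p) A)
  (hmono : forall i j, i < j -> j < s -> h i < h j)
  (hinA : forall i, i < s -> h i \in A)
  (hsurj : forall x, x \in A -> exists2 i, i < s & h i = x) :
  (exists N0 : nat, forall n : nat, N0 < n ->
     (forall j : nat, 1 <= j -> j < s - 1 ->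
        Rlt (b_seq s p h (s * n + j.+1)) (b_seq s p h (s * n + j)))
     /\ Rlt (b_seq s p h (s * n + 1)) (b_seq s p h n))
  /\ (forall n : nat, 1 <= n -> Rle (b_seq s p h n) (b_seq s p h (s * n)))
  /\ (forall n : nat, 1 <= n -> (b_seq s p h n = b_seq s p h (s * n) <-> h 0 = 0)).
Proof.
Open Scope R_scope.
have hs : (1 < s)%N by [].
have hlt : forall i, (i < s)%N -> (h i < p)%N.
  by move=> i hi; have := allP hAp _ (hinA i hi).
have hpR : 0 < INR p by have := INR_lt (ltn_trans (ltnW hs) hsp); rewrite /=; lra.
have ha := @alpha_gt1 s p hs hsp.
split; last split.
- exists (s ^ (2 * (s * s)))%N => n hn.
  have n0 : (0 < n)%N by lia.
  have [k [hk1 hk2]] := @a_lower s p h hs hmono n n0.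
  have hK : (2 * (s * s) <= k)%N.
    have : (s ^ (2 * (s * s)) < s ^ k.+1)%N by lia.
    by rewrite ltn_exp2l.
  have hg := @growth2 s p hs hsp k hK.
  have hA : (s * (n + 1) <= a_seq s p h n)%N.
    have : (s * (n+1) <= s ^ k.+2)%N by rewrite (expnS s k.+1) leq_mul2l; apply/orP; right; lia.
    lia.
  split.
  + move=> j hj1 hj2.
    rewrite /b_seq (@a_seq_sn s p h n _ hs n0) ?(@a_seq_sn s p h n _ hs n0); try lia.
    rewrite addnS; apply: cmp => //; first lia.
    have h1 := hlt j.+1 ltac:(lia).
    have h2 : (h j.+1 * (s * n + j) <= p * (s * n + j))%N by rewrite leq_mul2r (ltnW h1) orbT.
    have h3 : (p * (s * n + j) < p * (s * (n + 1)))%N by rewrite ltn_mul2l; apply/andP; split; lia.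
    have h4 : (p * (s * (n + 1)) <= p * a_seq s p h n)%N by rewrite leq_mul2l hA orbT.
    nia.
  + rewrite (@b_n_eq s p n h hs hsp n0) /b_seq (@a_seq_sn s p h n _ hs n0); last lia.
    rewrite addn1; apply: cmp => //; first lia.
    have h1 := hlt 1%N ltac:(lia).
    have h2 : (h 1%N * (s * n) < p * (s * n))%N by rewrite ltn_mul2r h1 andbT; lia.
    have h4 : (p * (s * (n + 1)) <= p * a_seq s p h n)%N by rewrite leq_mul2l hA orbT.
    nia.
- move=> n hn; rewrite b_sn //.
  have P0 : 0 < Rpower (INR n) (ln (INR p) / ln (INR s)) by apply: exp_pos.
  have : 0 <= INR (h 0%N) / (INR p * Rpower (INR n) (ln (INR p) / ln (INR s))).
    apply: Rmult_le_pos; first exact: pos_INR.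
    apply: Rlt_le; apply: Rinv_0_lt_compat; nra.
  lra.
- move=> n hn; rewrite b_sn //.
  have P0 : 0 < Rpower (INR n) (ln (INR p) / ln (INR s)) by apply: exp_pos.
  split.
  + move=> E.
    have : INR (h 0%N) / (INR p * Rpower (INR n) (ln (INR p) / ln (INR s))) = 0 by lra.
    move=> /(f_equal (Rmult^~ (INR p * Rpower (INR n) (ln (INR p) / ln (INR s))))).
    rewrite Rmult_0_l /Rdiv Rmult_assoc Rinv_l; last nra.
    rewrite Rmult_1_r => H0.
    by apply: INR_eq; rewrite H0.
  + move=> ->; rewrite /=; field; nra.
Qed.
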